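(* Let $x$ be a random variable with values in $[-1,1]$, and for $\eta>0$ let $\epsilon(\eta)=\frac1\eta\ln\mathbb E[e^{-\eta x}]$. Then for every $\eta>0$, \[ \frac1\eta\ln\mathbb E\big[e^{c\eta^2x^2-\eta x}\big]\;\le\;\epsilon(2\eta)+c\,\eta\,\epsilon(2\eta)^2,\qquad\text{where } c=\frac{1}{1+\sqrt{1+4\eta^2}}. \] *)

(* Defs.v *)
From Stdlib Require Import Reals.
Open Scope R_scope.

(* The law of a random variable x with values in [-1,1] is encoded by its
   expectation operator E, f |-> E[f(x)], on continuous test functions.
   By the Riesz representation theorem, such operators (positive, linear,
   normalised functionals on continuous functions, positivity tested on
   [-1,1]) correspond exactly to Borel probability measures on [-1,1].
   All integrands of the theorem are continuous functions of x. *)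
Definition is_expectation (E : (R -> R) -> R) : Prop :=
  (forall f g, continuity f -> continuity g ->
     E (fun x => f x + g x) = E f + E g) /\
  (forall (a : R) f, continuity f -> E (fun x => a * f x) = a * E f) /\
  (forall f g, continuity f -> continuity g ->
     (forall x, -1 <= x <= 1 -> f x <= g x) -> E f <= E g) /\
  E (fun _ => 1) = 1.

Definition eps (E : (R -> R) -> R) (eta : R) : R :=
  / eta * ln (E (fun x => exp (- eta * x))).

(* Main.v *)
Require Import Defs.
From Coquelicot Require Import Coquelicot.
From Stdlib Require Import Reals Lra Psatz FunctionalExtensionality.
Open Scope R_scope.

Lemma mono_le (f df : R -> R) (a b : R) :
  (forall x, is_derive f x (df x)) ->
  (forall x, a <= x <= b -> 0 <= df x) -> a <= b -> f a <= f b.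
Proof.
  intros Hd Hp Hab.
  destruct (MVT_gen f a b df) as [z [Hz Heq]].
  - intros x _; apply Hd.
  - intros x _. apply derivable_continuous_pt. exists (df x). apply is_derive_Reals. apply Hd.
  - rewrite Rmin_left in Hz by lra. rewrite Rmax_right in Hz by lra.
    assert (0 <= df z * (b - a)) by (apply Rmult_le_pos; [apply Hp; lra| lra]). lra.
Qed.

Definition hh (c s : R) := c * s ^ 2 / 4 + s / 2.
Definition GG (c s : R) := exp (hh c s - s) * (c * s / 2 + 1 / 2).

Lemma GG_der c x : is_derive (GG c) x (exp (hh c x - x) * ((c^2 * x^2 - 1)/4 + c/2)).
Proof.
  unfold GG, hh. auto_derive; [trivial|]. replace (c * x ^ 2 / 4 + x / 2 - x) with (c * (x * (x * 1)) * / 4 + x * / 2 + - x) by field. field.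
Qed.

Lemma GG_decr c a s s' : 0 <= c -> c^2 * a^2 + 2*c <= 1 ->
  -a <= s -> s <= s' -> s' <= a -> GG c s' <= GG c s.
Proof.
  intros Hc Ha H1 H2 H3.
  assert (- GG c s <= - GG c s'); [|lra].
  apply (mono_le (fun x => - GG c x) (fun x => - (exp (hh c x - x) * ((c^2 * x^2 - 1)/4 + c/2)))); auto.
  - intros x. apply is_derive_Reals; apply (derivable_pt_lim_opp _ x); apply is_derive_Reals; apply GG_der.
  - intros x Hx. assert (0 < exp (hh c x - x)) by apply exp_pos.
    assert (x^2 <= a^2) by nra.
    assert (c^2 * x^2 <= c^2 * a^2) by nra.
    nra.
Qed.

Lemma tangent c a t t0 : 0 <= c -> c^2 * a^2 + 2*c <= 1 ->
  -a <= t <= a -> -a <= t0 <= a ->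
  exp (hh c t) <= exp (hh c t0) + GG c t0 * (exp t - exp t0).
Proof.
  intros Hc Ha Ht Ht0.
  set (K := GG c t0).
  set (psi := fun x => exp (hh c x) - K * exp x).
  set (dpsi := fun x => exp x * (GG c x - K)).
  assert (Hd : forall x, is_derive psi x (dpsi x)).
  { intros x. unfold psi, dpsi, GG, hh. auto_derive; [trivial|].
    replace (c * x ^ 2 / 4 + x / 2 - x) with ((c * (x * (x * 1)) * / 4 + x * / 2) + - x) by field.
    rewrite (exp_plus (c * (x * (x * 1)) * / 4 + x * / 2) (- x)), exp_Ropp. field. apply Rgt_not_eq, exp_pos. }
  assert (psi t <= psi t0); [| unfold psi in *; lra].
  destruct (Rle_dec t t0).
  - apply (mono_le psi dpsi); auto. intros x Hx. unfold dpsi.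
    apply Rmult_le_pos; [left; apply exp_pos|].
    unfold K. assert (GG c t0 <= GG c x) by (apply (GG_decr c a); lra). lra.
  - assert (- psi t0 <= - psi t); [|lra].
    apply (mono_le (fun x => - psi x) (fun x => - dpsi x)); try lra.
    + intros x. apply is_derive_Reals; apply (derivable_pt_lim_opp _ x); apply is_derive_Reals; apply Hd.
    + intros x Hx. unfold dpsi.
      assert (0 < exp x) by apply exp_pos.
      unfold K. assert (GG c x <= GG c t0) by (apply (GG_decr c a); lra). nra.
Qed.

Lemma exp_le' x y : x <= y -> exp x <= exp y.
Proof. intros [H|H]; [left; apply exp_increasing; auto| subst; lra]. Qed.

Lemma ln_le' x y : 0 < x -> x <= y -> ln x <= ln y.
Proof. intros Hx [H|H]; [left; apply ln_increasing; auto| subst; lra]. Qed.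

Lemma cont_of_der f : (forall x, ex_derive f x) -> continuity f.
Proof.
  intros H x. destruct (H x) as [l Hl]. apply derivable_continuous_pt.
  exists l. apply is_derive_Reals. exact Hl.
Qed.

Theorem mainTheorem9 (E : (R -> R) -> R) (HE : is_expectation E)
  (eta : R) (Heta : 0 < eta) :
  let c := / (1 + sqrt (1 + 4 * eta ^ 2)) in
  / eta * ln (E (fun x => exp (c * eta ^ 2 * x ^ 2 - eta * x)))
    <= eps E (2 * eta) + c * eta * (eps E (2 * eta)) ^ 2.
Proof.
  intros c.
  destruct HE as [Hadd [Hscal [Hmon H1]]].
  assert (Hcst : forall a, E (fun _ => a) = a).
  { intros a. assert (Hf : (fun x : R => a * (fun _ : R => 1) x) = (fun _ => a)).
    { apply functional_extensionality; intros; ring. }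
    rewrite <- Hf, Hscal, H1; [ring|]. apply continuity_const. intros ? ?; auto. }
  set (S := sqrt (1 + 4 * eta ^ 2)).
  assert (HS0 : 0 <= S) by apply sqrt_pos.
  assert (HSS : S * S = 1 + 4 * eta ^ 2) by (apply sqrt_sqrt; nra).
  assert (Hc0 : 0 <= c).
  { unfold c. apply Rlt_le. apply Rinv_0_lt_compat. pose proof (sqrt_pos (1 + 4 * eta ^ 2)). lra. }
  assert (Hca : c ^ 2 * (2 * eta) ^ 2 + 2 * c <= 1).
  { unfold c. fold S. replace ((2 * eta) ^ 2) with (S * S - 1) by nra. right. field. lra. }
  set (U := E (fun x => exp (- (2 * eta) * x))).
  assert (HcU : continuity (fun x => exp (- (2 * eta) * x))).
  { apply cont_of_der. intros x. auto_derive. trivial. }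
  assert (HUlo : exp (- (2 * eta)) <= U).
  { rewrite <- (Hcst (exp (- (2*eta)))). unfold U. apply Hmon; auto.
    - apply continuity_const. intros ? ?; auto.
    - intros x Hx. apply exp_le'. nra. }
  assert (HUhi : U <= exp (2 * eta)).
  { rewrite <- (Hcst (exp (2*eta))). unfold U. apply Hmon; auto.
    - apply continuity_const. intros ? ?; auto.
    - intros x Hx. apply exp_le'. nra. }
  assert (HU0 : 0 < U) by (pose proof (exp_pos (- (2*eta))); lra).
  set (t0 := ln U).
  assert (Ht0 : - (2 * eta) <= t0 <= 2 * eta).
  { split.
    - rewrite <- (ln_exp (- (2 * eta))). apply ln_le'; auto. apply exp_pos.
    - rewrite <- (ln_exp (2 * eta)). apply ln_le'; auto. }
  assert (HeU : exp t0 = U) by (apply exp_ln; auto).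
  set (A := exp (hh c t0)). set (K := GG c t0).
  set (f := fun x => exp (c * eta ^ 2 * x ^ 2 - eta * x)).
  assert (Hcf : continuity f).
  { apply cont_of_der. intros x. unfold f. auto_derive. trivial. }
  assert (HEf : E f <= A).
  { assert (Hg : E (fun x => (fun _ => A - K * U) x + (fun x => K * exp (- (2 * eta) * x)) x) = A).
    { rewrite Hadd.
      - rewrite Hcst, Hscal by auto. fold U. ring.
      - apply continuity_const. intros ? ?; auto.
      - apply cont_of_der. intros x. auto_derive. trivial. }
    rewrite <- Hg. apply Hmon; auto.
    - apply cont_of_der. intros x. auto_derive. trivial.
    - intros x Hx. unfold f.
      replace (c * eta ^ 2 * x ^ 2 - eta * x) with (hh c (- (2 * eta) * x)) by (unfold hh; field).
      pose proof (tangent c (2 * eta) (- (2 * eta) * x) t0 Hc0 Hca) as T.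
      rewrite HeU in T. unfold A, K. assert (- (2 * eta) <= - (2 * eta) * x <= 2 * eta) by nra.
      specialize (T H Ht0). lra. }
  assert (HEf0 : exp (- eta) <= E f).
  { rewrite <- (Hcst (exp (- eta))). apply Hmon; auto.
    - apply continuity_const. intros ? ?; auto.
    - intros x Hx. unfold f. apply exp_le'. assert (0 <= c * eta ^ 2 * x ^ 2) by (apply Rmult_le_pos; nra). nra. }
  assert (Hln : ln (E f) <= hh c t0).
  { rewrite <- (ln_exp (hh c t0)). apply ln_le'; auto. pose proof (exp_pos (- eta)); lra. }
  fold f. unfold eps. fold U. fold t0.
  replace (/ (2 * eta) * t0 + c * eta * (/ (2 * eta) * t0) ^ 2) with (/ eta * hh c t0)
    by (unfold hh; field; lra).
  apply Rmult_le_compat_l; auto. left; apply Rinv_0_lt_compat; auto.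
Qed.
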